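(* Let $\ell^\infty\neq0$ be a complex constant. For $k\in\{1,2\}$ let $\Sigma^{(k)}$ be finite disjoint index sets, and for $\alpha\in\Sigma^{(k)}$ let $m_\alpha\ge1$, $z_\alpha\in\mathbb C$ (pairwise distinct within each $\Sigma^{(k)}$), and $\ell^\alpha_{[p]}\in\mathbb C$ ($0\le p\le m_\alpha-1$) with $\ell^\alpha_{[m_\alpha-1]}\neq0$. Let $\chi_k(z)=\sum_{\alpha\in\Sigma^{(k)}}\sum_{p=0}^{m_\alpha-1}\frac{\ell^\alpha_{[p]}}{(z-z_\alpha)^{p+1}}$, $\varphi_k=\chi_k-\ell^\infty$, $M_k=\sum_{\alpha\in\Sigma^{(k)}}m_\alpha$, $M=M_1+M_2$, and assume the zeros $\zeta^{(1)}_i$ ($1\le i\le M_1$) of $\varphi_1$ and $\zeta^{(2)}_i$ ($M_1<i\le M$) of $\varphi_2$ are simple. For $\gamma\neq0$ let $\varphi_{1\otimes2,\gamma}(z)=\chi_1(z)+\chi_2(z-\gamma^{-1})-\ell^\infty$, and for $\gamma$ small let $\zeta_i(\gamma)$ be its zeros labelled so that $\zeta_i(\gamma)=\zeta^{(1)}_i+O(\gamma)$ for $i\le M_1$ and $\zeta_i(\gamma)=\gamma^{-1}+\zeta^{(2)}_i+O(\gamma)$ for $i>M_1$. Then for each $i\in\{1,\dots,M\}$, $\varphi_{1\otimes2,\gamma}'(\zeta_i(\gamma))=\varphi_k'(\zeta^{(k)}_i)+O(\gamma)$, with $k=1$ if $i\le M_1$ and $k=2$ if $i>M_1$. *)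

(* Defs.v *)
From HB Require Import structures.
From mathcomp Require Import all_boot all_order all_algebra.
From mathcomp Require Import complex.
From mathcomp Require Import all_classical all_reals all_analysis.
Set Implicit Arguments. Unset Strict Implicit. Unset Printing Implicit Defensive.
Import Order.TTheory GRing.Theory Num.Theory.
Import numFieldNormedType.Exports.
Local Open Scope ring_scope.

Definition chi (C : fieldType) (n : nat) (m : 'I_n -> nat) (z : 'I_n -> C)
  (l : 'I_n -> nat -> C) (x : C) : C :=
  \sum_(a < n) \sum_(p < m a) l a p / (x - z a) ^+ p.+1.

Definition is_pole (C : fieldType) (n : nat) (z : 'I_n -> C) (x : C) : Prop :=
  exists a : 'I_n, x = z a.

Definition total_mult (n : nat) (m : 'I_n -> nat) : nat := (\sum_(a < n) m a)%N.

(* Equip the complex numbers R[i] with their standard normed-module structure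
   over themselves (the same instances MathComp-Analysis provides for a
   generic numFieldType via numFieldNormedType), so that derive1 is the usual
   complex derivative. *)
Section complex_normed.
Variable R : rcfType.
HB.instance Definition _ := GRing.ComAlgebra.copy R[i] (R[i])^o.
HB.instance Definition _ := Vector.copy R[i] (R[i])^o.
HB.instance Definition _ := NormedModule.copy R[i] (R[i])^o.
End complex_normed.

(* Main.v *)
Require Import Defs.
From HB Require Import structures.
From mathcomp Require Import all_boot all_order all_algebra.
From mathcomp Require Import complex.
From mathcomp Require Import all_classical all_reals all_analysis.
From mathcomp Require Import ring lra.
Import Order.TTheory GRing.Theory Num.Theory.
Import numFieldNormedType.Exports.
Local Open Scope ring_scope.
Local Open Scope complex_scope.

Lemma alg (F : fieldType) (c n A B : F) : A != 0 -> B != 0 ->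
  c * (- ((A * B)^-1) * (n * B)) = - (c * n) / A.
Proof. by move=> A0 B0; field; rewrite A0 B0. Qed.

Section NC.
Variable R : realType.
Definition nc (x : R[i]) : R := complex.Re `|x|.
Lemma ncE x : `|x| = (nc x)%:C.
Proof. by rewrite /nc normc_def. Qed.
Lemma nc_ge0 x : 0 <= nc x.
Proof. by rewrite -ler0c -ncE. Qed.
Lemma ncD x y : nc (x + y) <= nc x + nc y.
Proof. by rewrite -lecR rmorphD /= -!ncE ler_normD. Qed.
Lemma ncB x y : nc x - nc y <= nc (x - y).
Proof. by rewrite -lecR rmorphB /= -!ncE lerB_dist. Qed.
Lemma ncM x y : nc (x * y) = nc x * nc y.
Proof. by apply: complexI; rewrite rmorphM /= -!ncE normrM. Qed.
Lemma ncV x : nc (x^-1) = (nc x)^-1.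
Proof. by apply: complexI; rewrite fmorphV /= -!ncE normfV. Qed.
Lemma ncX x n : nc (x ^+ n) = nc x ^+ n.
Proof. by apply: complexI; rewrite rmorphXn /= -!ncE normrX. Qed.
Lemma ncN x : nc (- x) = nc x.
Proof. by rewrite /nc normrN. Qed.
Lemma ncBC x y : nc (x - y) = nc (y - x).
Proof. by rewrite /nc distrC. Qed.
Lemma nc_nat n : nc (n%:R) = n%:R.
Proof. by apply: complexI; rewrite -ncE normr_nat rmorph_nat. Qed.
Lemma nc_eq0 x : (nc x == 0) = (x == 0).
Proof.
apply/eqP/eqP => [h|->]; last by rewrite /nc normr0.
by apply/eqP; rewrite -normr_eq0 ncE h.
Qed.
Lemma nc_sum n (F : 'I_n -> R[i]) : nc (\sum_(a < n) F a) <= \sum_(a < n) nc (F a).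
Proof.
elim/big_ind2: _ => //; first by rewrite /nc normr0.
by move=> x1 x2 y1 y2 h1 h2; apply: le_trans (ncD _ _) _; apply: lerD.
Qed.
Lemma nc_real (k : R) : nc k%:C = `|k|.
Proof. by rewrite /nc normc_def /= expr0n /= addr0 sqrtr_sqr. Qed.

Lemma powdiff (U V : R[i]) (s : R) q : nc U <= s -> nc V <= s ->
  nc (U ^+ q.+1 - V ^+ q.+1) <= q.+1%:R * s ^+ q * nc (U - V).
Proof.
move=> hU hV; have s0 : 0 <= s by exact: le_trans (nc_ge0 _) hU.
elim: q => [|q IH]; first by rewrite !expr1 expr0 mulr1 mul1r.
have -> : U ^+ q.+2 - V ^+ q.+2 = U * (U ^+ q.+1 - V ^+ q.+1) + V ^+ q.+1 * (U - V).
  by rewrite [U ^+ q.+2]exprS [V ^+ q.+2]exprS; ring.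
apply: le_trans (ncD _ _) _; rewrite !ncM ncX.
have h1 : nc U * nc (U ^+ q.+1 - V ^+ q.+1) <= s * (q.+1%:R * s ^+ q * nc (U - V)).
  by apply: ler_pM => //; exact: nc_ge0.
have h2 : nc V ^+ q.+1 * nc (U - V) <= s ^+ q.+1 * nc (U - V).
  by apply: ler_wpM2r; [exact: nc_ge0| apply: lerXn2r => //; rewrite nnegrE nc_ge0].
apply: le_trans (lerD h1 h2) _.
rewrite le_eqVlt; apply/orP; left; apply/eqP.
rewrite [q.+2%:R]mulrS [q.+1%:R]mulrS !exprS; ring.
Qed.

Lemma ncV_le (u : R[i]) (r : R) : 0 < r -> r <= nc u -> nc (u^-1) <= r^-1.
Proof.
move=> r0 hr; have u0 : 0 < nc u by exact: lt_le_trans hr.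
by rewrite ncV lef_pV2 // posrE.
Qed.

Lemma term_lip (c w x y : R[i]) (k q : nat) (r : R) : 0 < r ->
  r <= nc (x - w) -> r <= nc (y - w) ->
  nc (- (c * k%:R) / (x - w) ^+ q.+1 - - (c * k%:R) / (y - w) ^+ q.+1)
  <= nc c * k%:R * q.+1%:R * r^-1 ^+ q.+2 * nc (x - y).
Proof.
move=> r0 hx hy.
have x0 : x - w != 0 by rewrite -nc_eq0; apply: lt0r_neq0; exact: lt_le_trans hx.
have y0 : y - w != 0 by rewrite -nc_eq0; apply: lt0r_neq0; exact: lt_le_trans hy.
have hU := ncV_le _ _ r0 hx; have hV := ncV_le _ _ r0 hy.
have E : - (c * k%:R) / (x - w) ^+ q.+1 - - (c * k%:R) / (y - w) ^+ q.+1
   = - (c * k%:R) * ((x - w)^-1 ^+ q.+1 - (y - w)^-1 ^+ q.+1).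
  by rewrite !exprVn mulrBr.
have E2 : (x - w)^-1 - (y - w)^-1 = (y - x) * (x - w)^-1 * (y - w)^-1.
  by field; rewrite x0 y0.
rewrite E ncM ncN ncM nc_nat.
have s0 : 0 <= r^-1 by rewrite invr_ge0 ltW.
have h1 := powdiff _ _ _ q hU hV.
have h2 : nc ((x - w)^-1 - (y - w)^-1) <= r^-1 ^+ 2 * nc (x - y).
  have hUV := ler_pM (nc_ge0 _) (nc_ge0 _) hU hV.
  rewrite E2 !ncM -mulrA (ncBC y x) [X in _ <= X]mulrC expr2.
  by apply: ler_wpM2l; first exact: nc_ge0.
have h3 : nc ((x - w)^-1 ^+ q.+1 - (y - w)^-1 ^+ q.+1) <= q.+1%:R * r^-1 ^+ q * (r^-1 ^+ 2 * nc (x - y)).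
  apply: le_trans h1 _; apply: ler_wpM2l => //.
  by apply: mulr_ge0 => //; exact: exprn_ge0.
have h4 := ler_wpM2l (mulr_ge0 (nc_ge0 c) (ler0n _ k)) h3.
apply: le_trans h4 _.
rewrite le_eqVlt; apply/orP; left; apply/eqP.
rewrite [r^-1 ^+ q.+2]exprS [r^-1 ^+ q.+1]exprS; ring.
Qed.

Lemma term_decay (c w x : R[i]) (k q : nat) (t : R) :
  0 < nc (x - w) -> (nc (x - w))^-1 <= t -> t <= 1 ->
  nc (- (c * k%:R) / (x - w) ^+ q.+2) <= nc c * k%:R * t ^+ 2.
Proof.
move=> x0 ht t1.
have t0 : 0 <= t by apply: le_trans ht; rewrite invr_ge0 nc_ge0.
rewrite ncM ncN ncM nc_nat ncV ncX -exprVn.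
apply: ler_wpM2l; first by apply: mulr_ge0 => //; exact: nc_ge0.
apply: (@le_trans _ _ (t ^+ q.+2)).
  by apply: lerXn2r => //; rewrite nnegrE invr_ge0 nc_ge0.
rewrite -[q.+2]/(2 + q)%N exprD; apply: ler_piMr; first exact: exprn_ge0.
exact: exprn_ile1.
Qed.

Definition dchi n (m : 'I_n -> nat) (z : 'I_n -> R[i]) (l : 'I_n -> nat -> R[i]) (x : R[i]) : R[i] :=
  \sum_(a < n) \sum_(p < m a) - (l a p * p.+1%:R) / (x - z a) ^+ p.+2.

Definition Lip n (m : 'I_n -> nat) (l : 'I_n -> nat -> R[i]) (r : R) : R :=
  \sum_(a < n) \sum_(p < m a) nc (l a p) * p.+1%:R * p.+2%:R * r^-1 ^+ p.+3.

Definition Dec n (m : 'I_n -> nat) (l : 'I_n -> nat -> R[i]) : R :=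
  \sum_(a < n) \sum_(p < m a) nc (l a p) * p.+1%:R.

Lemma dchi_lip n m z l (x y : R[i]) (r : R) : 0 < r ->
  (forall a, r <= nc (x - z a)) -> (forall a, r <= nc (y - z a)) ->
  nc (dchi n m z l x - dchi n m z l y) <= Lip n m l r * nc (x - y).
Proof.
move=> r0 hx hy; rewrite /dchi -sumrB; apply: le_trans (nc_sum _ _) _.
rewrite /Lip mulr_suml; apply: ler_sum => a _.
rewrite -sumrB; apply: le_trans (nc_sum _ _) _.
rewrite mulr_suml; apply: ler_sum => p _.
exact: term_lip.
Qed.

Lemma dchi_decay n m z l (x : R[i]) (t : R) :
  (forall a, 0 < nc (x - z a) /\ (nc (x - z a))^-1 <= t) -> t <= 1 ->
  nc (dchi n m z l x) <= Dec n m l * t ^+ 2.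
Proof.
move=> hx t1; rewrite /dchi; apply: le_trans (nc_sum _ _) _.
rewrite /Dec mulr_suml; apply: ler_sum => a _.
apply: le_trans (nc_sum _ _) _.
rewrite mulr_suml; apply: ler_sum => p _.
have [h1 h2] := hx a.
exact: term_decay.
Qed.

Lemma Lip_ge0 n m l r : 0 <= r -> 0 <= Lip n m l r.
Proof.
move=> r0; apply: sumr_ge0 => a _; apply: sumr_ge0 => p _.
apply: mulr_ge0; last by apply: exprn_ge0; rewrite invr_ge0.
by apply: mulr_ge0 => //; apply: mulr_ge0 => //; exact: nc_ge0.
Qed.

Lemma Dec_ge0 n m l : 0 <= Dec n m l.
Proof.
apply: sumr_ge0 => a _; apply: sumr_ge0 => p _.
by apply: mulr_ge0 => //; exact: nc_ge0.
Qed.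

Lemma sum_ge_term n (F : 'I_n -> R) a : (forall b, 0 <= F b) -> F a <= \sum_(b < n) F b.
Proof.
move=> h; rewrite (bigD1 a) //= lerDl; exact: sumr_ge0.
Qed.

Lemma exists_r n (f : 'I_n -> R) : (forall a, 0 < f a) -> exists r, 0 < r /\ forall a, r <= f a.
Proof.
move=> h; set S := \sum_(a < n) (f a)^-1.
have S0 : 0 <= S by apply: sumr_ge0 => a _; rewrite invr_ge0 ltW.
exists (1 + S)^-1; split; first by rewrite invr_gt0; lra.
move=> a; rewrite -[f a]invrK lef_pV2 ?posrE ?invr_gt0 //; last by lra.
have := sum_ge_term n (fun b => (f b)^-1) a.
rewrite -/S => H; have {H} H : (f a)^-1 <= S by apply: H => b; rewrite invr_ge0 ltW.
lra.
Qed.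

Lemma core nA mA zA lA nB mB zB lB (x0 : R[i]) (d K : R) (y o : R[i] -> R[i]) :
  (forall a, x0 != zA a) -> 0 < d -> 0 <= K ->
  (forall g, 0 < nc g < d -> nc (y g - x0) <= K * nc g /\ nc (o g - y g) = (nc g)^-1) ->
  exists d' K' : R, 0 < d' /\ 0 <= K' /\ forall g, 0 < nc g < d' ->
    nc (dchi nA mA zA lA (y g) + dchi nB mB zB lB (o g) - dchi nA mA zA lA x0) <= K' * nc g.
Proof.
move=> hx0 d0 K0 hyp.
have [r [r0 hr]] : exists r, 0 < r /\ forall a, r <= nc (x0 - zA a).
  apply: exists_r => a; by rewrite lt0r nc_eq0 subr_eq0 hx0 nc_ge0.
set B0 := nc x0 + r / 2 + \sum_(b < nB) nc (zB b).
have S0 : 0 <= \sum_(b < nB) nc (zB b) by apply: sumr_ge0 => b _; exact: nc_ge0.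
have B00 : 0 <= B0 by have := nc_ge0 x0; rewrite /B0; lra.
set d' := Num.min d (Num.min (r / (2 * (K + 1))) (1 / (2 * (B0 + 1)))).
set L := Lip nA mA lA (r / 2).
set Dc := Dec nB mB lB.
have L0 : 0 <= L by apply: Lip_ge0; lra.
have Dc0 : 0 <= Dc by exact: Dec_ge0.
exists d', (L * K + Dc * 4); split.
  rewrite !lt_min d0 /= !divr_gt0 //; lra.
split; first by apply: addr_ge0; apply: mulr_ge0 => //; lra.
move=> g /andP [g0 gd]; move: gd; rewrite !lt_min => /and3P [gd g1 g2].
have [hy ho] := hyp g (introT andP (conj g0 gd)).
move: g0 gd g1 g2 hy ho; set G := nc g => g0 gd g1 g2 hy ho.
rewrite ltr_pdivlMr in g1; last by lra.
rewrite ltr_pdivlMr in g2; last by lra.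
have hyr : nc (y g - x0) <= r / 2 by nra.
have dA : forall a, r / 2 <= nc (y g - zA a).
  move=> a; have := ncD (x0 - y g) (y g - zA a).
  rewrite (ncBC x0) (_ : x0 - y g + (y g - zA a) = x0 - zA a); last by ring.
  by have := hr a; lra.
have h1 := dchi_lip nA mA zA lA (y g) x0 (r / 2) (ltac:(lra)) dA (fun a => ltac:(have := hr a; lra)).
have G0 : G != 0 by rewrite gt_eqF.
set Gi := G^-1.
have Gi0 : 0 < Gi by rewrite invr_gt0.
have GGi : Gi * G = 1 by rewrite mulVf.
have hGi : 2 * (B0 + 1) < Gi.
  have := g2; rewrite -(ltr_pM2l Gi0) mulrA GGi mul1r mulr1 //.
have dB : forall b, 0 < nc (o g - zB b) /\ (nc (o g - zB b))^-1 <= 2 * G.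
  move=> b.
  have t1 : nc (o g - y g) <= nc (o g - zB b) + nc (zB b) + nc x0 + nc (y g - x0).
    have -> : o g - y g = (o g - zB b) + zB b - x0 - (y g - x0) by ring.
    apply: le_trans (ncD _ _) _; rewrite ncN lerD2r.
    apply: le_trans (ncD _ _) _; rewrite ncN lerD2r.
    exact: ncD.
  have t2 : nc (zB b) <= \sum_(b < nB) nc (zB b) by apply: sum_ge_term => c; exact: nc_ge0.
  have D0 : Gi / 2 <= nc (o g - zB b).
    rewrite ho -/Gi in t1; move: t1 t2 hyr hGi; rewrite /B0; lra.
  split; first by lra.
  have -> : 2 * G = (Gi / 2)^-1 by rewrite /Gi invfM !invrK mulrC.
  by rewrite lef_pV2 // posrE; lra.
have t1 : 2 * G <= 1 by nra.
have h2 := dchi_decay nB mB zB lB (o g) (2 * G) dB t1.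
rewrite (_ : forall a b c : R[i], a + b - c = (a - c) + b); last by move=> *; ring.
apply: le_trans (ncD _ _) _.
have h3 : L * nc (y g - x0) <= L * (K * G) by apply: ler_wpM2l.
have h5 : (2 * G) ^+ 2 <= 4 * G by rewrite expr2; nra.
have h4 : Dc * (2 * G) ^+ 2 <= Dc * (4 * G) by apply: ler_wpM2l.
rewrite -/L in h1; rewrite -/Dc in h2.
rewrite mulrDl -mulrA -[Dc * 4 * G]mulrA; lra.
Qed.
Lemma term_derive (w c : R[i]) (k : nat) (x : R[i]) : x != w ->
  is_derive x 1 (fun y : R[i] => c / (y - w) ^+ k.+1) (- (c * k.+1%:R) / (x - w) ^+ k.+2).
Proof.
move=> xw.
have xw0 : x - w != 0 by rewrite subr_eq0.
have h1 : is_derive x (1:R[i]) (fun y : R[i] => y - w) 1.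
  have := @is_deriveB _ _ _ id (cst w) x 1 1 0 (is_derive_id _ _) (is_derive_cst _ _ _).
  by rewrite subr0.
have hu : is_derive x (1:R[i]) (fun y : R[i] => (y - w) ^+ k.+1) (k.+1%:R * (x - w) ^+ k).
  have := @is_deriveX R[i] R[i] (fun y => y - w) k.+1 x 1 1 h1.
  rewrite exprfctE => H. have H2 := (H : is_derive x (1:R[i]) (fun y : R[i] => (y - w) ^+ k.+1) ((k.+1%:R * (x - w) ^+ k.+1.-1) * 1)).
  by rewrite mulr1 in H2.
have ux : (fun y : R[i] => (y - w) ^+ k.+1) x != 0 by rewrite /= expf_neq0.
have hv : is_derive x (1:R[i]) (fun y : R[i] => ((y - w) ^+ k.+1)^-1)
   (- ((x - w) ^+ k.+1) ^- 2 *: (k.+1%:R * (x - w) ^+ k)).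
  apply: DeriveDef.
    exact: (@derivableV R[i] R[i] (fun y : R[i] => (y - w) ^+ k.+1) x 1 ux (@ex_derive _ _ _ _ _ _ _ hu)).
  rewrite (@deriveV R[i] R[i] (fun y : R[i] => (y - w) ^+ k.+1) x 1 ux (@ex_derive _ _ _ _ _ _ _ hu)).
  by rewrite (@derive_val _ _ _ _ _ _ _ hu).
have H := @is_deriveZ R[i] R[i] R[i] _ c x 1 _ hv.
apply: DeriveDef; first exact: (@ex_derive _ _ _ _ _ _ _ H).
rewrite (_ : (fun y : R[i] => c / (y - w) ^+ k.+1) = c *: (fun y : R[i] => ((y - w) ^+ k.+1)^-1)); last first.
  by apply/funext => y.
rewrite (@derive_val _ _ _ _ _ _ _ H).
rewrite /GRing.scale /=.
have E : ((x - w) ^+ k.+1) ^+ 2 = (x - w) ^+ k.+2 * (x - w) ^+ k.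
  by rewrite -exprM -exprD; congr (_ ^+ _); rewrite muln2 -addnn addnS addSn.
rewrite E.
have A0 : (x - w) ^+ k.+2 != 0 by rewrite expf_neq0.
have B0 : (x - w) ^+ k != 0 by rewrite expf_neq0.
move: A0 B0; set A := (x - w) ^+ k.+2; set B := (x - w) ^+ k => A0 B0.
exact: alg.
Qed.

Lemma chi_derive n (m : 'I_n -> nat) (z : 'I_n -> R[i]) (l : 'I_n -> nat -> R[i]) (x : R[i]) :
  ~ is_pole z x ->
  is_derive x (1:R[i]) (@chi _ n m z l) (dchi n m z l x).
Proof.
move=> np.
have H : is_derive x (1:R[i])
   (\sum_(a < n) (fun y : R[i] => \sum_(p < m a) l a p / (y - z a) ^+ p.+1))
   (\sum_(a < n) \sum_(p < m a) - (l a p * p.+1%:R) / (x - z a) ^+ p.+2).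
  apply: is_derive_sum => a.
  have H2 : is_derive x (1:R[i]) (\sum_(p < m a) (fun y : R[i] => l a p / (y - z a) ^+ p.+1))
     (\sum_(p < m a) - (l a p * p.+1%:R) / (x - z a) ^+ p.+2).
    apply: is_derive_sum => p; apply: term_derive.
    by apply/eqP => e; apply: np; exists a.
  by rewrite fct_sumE in H2.
by rewrite fct_sumE in H.
Qed.

Lemma chi_shift n (m : 'I_n -> nat) (z : 'I_n -> R[i]) (l : 'I_n -> nat -> R[i]) (c y : R[i]) :
  chi m z l (y - c) = chi m (fun a => z a + c) l y.
Proof.
rewrite /chi; apply: eq_bigr => a _; apply: eq_bigr => p _.
by rewrite (_ : y - c - z a = y - (z a + c)) //; ring.
Qed.

Lemma dchi_shift n (m : 'I_n -> nat) (z : 'I_n -> R[i]) (l : 'I_n -> nat -> R[i]) (c y : R[i]) :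
  dchi n m z l (y - c) = dchi n m (fun a => z a + c) l y.
Proof.
rewrite /dchi; apply: eq_bigr => a _; apply: eq_bigr => p _.
by rewrite (_ : y - c - z a = y - (z a + c)) //; ring.
Qed.

Lemma derive_phi n (m : 'I_n -> nat) (z : 'I_n -> R[i]) (l : 'I_n -> nat -> R[i]) (linf x : R[i]) :
  ~ is_pole z x -> derive1 (fun y => chi m z l y - linf) x = dchi n m z l x.
Proof.
move=> np; rewrite derive1E.
have H := is_deriveB (chi_derive n m z l x np) (is_derive_cst linf x 1).
rewrite subr0 in H.
exact: (@derive_val _ _ _ _ _ _ _ H).
Qed.

Lemma derive_phig n1 (m1 : 'I_n1 -> nat) (z1 : 'I_n1 -> R[i]) (l1 : 'I_n1 -> nat -> R[i])
  n2 (m2 : 'I_n2 -> nat) (z2 : 'I_n2 -> R[i]) (l2 : 'I_n2 -> nat -> R[i]) (linf c x : R[i]) :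
  ~ is_pole z1 x -> ~ is_pole z2 (x - c) ->
  derive1 (fun y => chi m1 z1 l1 y + chi m2 z2 l2 (y - c) - linf) x
  = dchi n1 m1 z1 l1 x + dchi n2 m2 z2 l2 (x - c).
Proof.
move=> np1 np2.
have np2' : ~ is_pole (fun a => z2 a + c) x.
  by move=> [a ha]; apply: np2; exists a; rewrite ha; ring.
rewrite derive1E dchi_shift.
have H := is_deriveB (is_deriveD (chi_derive n1 m1 z1 l1 x np1)
   (chi_derive n2 m2 (fun a => z2 a + c) l2 x np2')) (is_derive_cst linf x 1).
rewrite subr0 in H.
rewrite (_ : (fun y => chi m1 z1 l1 y + chi m2 z2 l2 (y - c) - linf) =
   chi m1 z1 l1 + chi m2 (fun a => z2 a + c) l2 - cst linf); last first.
  by apply/funext => y /=; rewrite chi_shift.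
exact: (@derive_val _ _ _ _ _ _ _ H).
Qed.

Lemma ltC_nc (g : R[i]) (d : R) : (0 < `|g| < d%:C) = (0 < nc g < d).
Proof. by rewrite ncE !ltcR. Qed.

Lemma leC_nc (u g : R[i]) (K : R) : (`|u| <= K%:C * `|g|) = (nc u <= K * nc g).
Proof. by rewrite !ncE -rmorphM lecR. Qed.
End NC.
Arguments nc {R}.
Arguments dchi {R}.
Arguments core {R}.

Theorem lemmaC3 (R : realType) (linf : R[i])
  (n1 n2 : nat)
  (m1 : 'I_n1 -> nat) (z1 : 'I_n1 -> R[i]) (l1 : 'I_n1 -> nat -> R[i])
  (m2 : 'I_n2 -> nat) (z2 : 'I_n2 -> R[i]) (l2 : 'I_n2 -> nat -> R[i])
  (zeta1 : 'I_(total_mult m1) -> R[i]) (zeta2 : 'I_(total_mult m2) -> R[i]) :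
  linf != 0 ->
  (forall a, (1 <= m1 a)%N) -> (forall a, (1 <= m2 a)%N) ->
  injective z1 -> injective z2 ->
  (forall a, l1 a (m1 a).-1 != 0) -> (forall a, l2 a (m2 a).-1 != 0) ->
  (* zeta1 enumerates the zeros of phi_1 = chi_1 - linf, all simple *)
  injective zeta1 ->
  (forall i, ~ is_pole z1 (zeta1 i)) ->
  (forall i, chi m1 z1 l1 (zeta1 i) - linf = 0) ->
  (forall x, ~ is_pole z1 x -> chi m1 z1 l1 x - linf = 0 ->
     exists i, x = zeta1 i) ->
  (forall i, derive1 (fun x => chi m1 z1 l1 x - linf) (zeta1 i) != 0) ->
  (* zeta2 enumerates the zeros of phi_2 = chi_2 - linf, all simple *)
  injective zeta2 ->
  (forall i, ~ is_pole z2 (zeta2 i)) ->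
  (forall i, chi m2 z2 l2 (zeta2 i) - linf = 0) ->
  (forall x, ~ is_pole z2 x -> chi m2 z2 l2 x - linf = 0 ->
     exists i, x = zeta2 i) ->
  (forall i, derive1 (fun x => chi m2 z2 l2 x - linf) (zeta2 i) != 0) ->
  let phig := fun (g x : R[i]) =>
    chi m1 z1 l1 x + chi m2 z2 l2 (x - g^-1) - linf in
  let poleg := fun (g x : R[i]) => is_pole z1 x \/ is_pole z2 (x - g^-1) in
  (* zeros labelled i <= M_1 *)
  (forall (i : 'I_(total_mult m1)) (zeta : R[i] -> R[i]),
     (exists d K : R, 0 < d /\ 0 <= K /\ forall g : R[i], 0 < `|g| < d%:C ->
        ~ poleg g (zeta g) /\ phig g (zeta g) = 0 /\
        `|zeta g - zeta1 i| <= K%:C * `|g|) ->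
     exists d K : R, 0 < d /\ 0 <= K /\ forall g : R[i], 0 < `|g| < d%:C ->
       `|derive1 (phig g) (zeta g)
          - derive1 (fun x => chi m1 z1 l1 x - linf) (zeta1 i)| <= K%:C * `|g|)
  /\
  (* zeros labelled M_1 < i <= M *)
  (forall (i : 'I_(total_mult m2)) (zeta : R[i] -> R[i]),
     (exists d K : R, 0 < d /\ 0 <= K /\ forall g : R[i], 0 < `|g| < d%:C ->
        ~ poleg g (zeta g) /\ phig g (zeta g) = 0 /\
        `|zeta g - (g^-1 + zeta2 i)| <= K%:C * `|g|) ->
     exists d K : R, 0 < d /\ 0 <= K /\ forall g : R[i], 0 < `|g| < d%:C ->
       `|derive1 (phig g) (zeta g)
          - derive1 (fun x => chi m2 z2 l2 x - linf) (zeta2 i)| <= K%:C * `|g|).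
Proof.
move=> linf0 hm1 hm2 iz1 iz2 hl1 hl2 izeta1 np1 z1z c1 d1 izeta2 np2 z2z c2 d2 phig poleg.
split.
- move=> i zeta [d [K [d0 [K0 Hz]]]].
  have hx0 : forall a, zeta1 i != z1 a.
    by move=> a; apply/eqP => e; apply: (np1 i); exists a.
  have hyp : forall g, 0 < nc g < d -> nc (zeta g - zeta1 i) <= K * nc g /\
      nc ((zeta g - g^-1) - zeta g) = (nc g)^-1.
    move=> g hg; rewrite -ltC_nc in hg; have [_ [_ H3]] := Hz g hg.
    split; first by rewrite -leC_nc.
    by rewrite (_ : zeta g - g^-1 - zeta g = - g^-1); [rewrite ncN ncV | ring].
  have [d' [K' [d'0 [K'0 Hc]]]] := core n1 m1 z1 l1 n2 m2 z2 l2 (zeta1 i) d K zeta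
     (fun g => zeta g - g^-1) hx0 d0 K0 hyp.
  exists (Num.min d d'), K'; split; first by rewrite lt_min d0 d'0.
  split => // g; rewrite ltC_nc lt_min => /andP [g0 /andP [gd gd']].
  have [hp [_ _]] := Hz g (ltac:(by rewrite ltC_nc g0 gd)).
  rewrite /phig derive_phig; last 2 first.
  + by move=> h; apply: hp; left.
  + by move=> h; apply: hp; right.
  rewrite derive_phi // leC_nc.
  exact: Hc (introT andP (conj g0 gd')).
- move=> i zeta [d [K [d0 [K0 Hz]]]].
  have hx0 : forall a, zeta2 i != z2 a.
    by move=> a; apply/eqP => e; apply: (np2 i); exists a.
  have hyp : forall g, 0 < nc g < d -> nc ((zeta g - g^-1) - zeta2 i) <= K * nc g /\
      nc (zeta g - (zeta g - g^-1)) = (nc g)^-1.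
    move=> g hg; rewrite -ltC_nc in hg; have [_ [_ H3]] := Hz g hg.
    split; first by rewrite (_ : zeta g - g^-1 - zeta2 i = zeta g - (g^-1 + zeta2 i));
      [rewrite -leC_nc | ring].
    by rewrite (_ : zeta g - (zeta g - g^-1) = g^-1); [rewrite ncV | ring].
  have [d' [K' [d'0 [K'0 Hc]]]] := core n2 m2 z2 l2 n1 m1 z1 l1 (zeta2 i) d K
     (fun g => zeta g - g^-1) zeta hx0 d0 K0 hyp.
  exists (Num.min d d'), K'; split; first by rewrite lt_min d0 d'0.
  split => // g; rewrite ltC_nc lt_min => /andP [g0 /andP [gd gd']].
  have [hp [_ _]] := Hz g (ltac:(by rewrite ltC_nc g0 gd)).
  rewrite /phig derive_phig; last 2 first.
  + by move=> h; apply: hp; left.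
  + by move=> h; apply: hp; right.
  rewrite derive_phi // leC_nc [dchi n1 _ _ _ _ + _]addrC.
  exact: Hc (introT andP (conj g0 gd')).
Qed.
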